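(* Let $\{\mathcal J_i\}_{i=1}^m$ be a partition of $\{1,\dots,n\}$ into consecutive intervals listed in increasing order, $|\mathcal J_i|=d(i)$, let $P_i$ be the orthogonal projection onto $\mathrm{span}\{e_k:k\in\mathcal J_i\}$, and let $\mathcal C_{\mathcal P}(X)=\sum_{i=1}^m P_iXP_i$ for $X\in\mathcal M_n(\mathbb C)$. Then the following are equivalent: (1) the set $\mathcal C_{\mathcal P}(\mathcal U_n(S))=\{\mathcal C_{\mathcal P}(U^*SU):U\in\mathcal M_n(\mathbb C)\text{ unitary}\}$ is convex for every positive semidefinite $S\in\mathcal M_n(\mathbb C)$; (2) $d(i)=1$ for every $1\le i\le m$ (and hence $m=n$). *)

(* Defs.v *)
From HB Require Import structures.
From mathcomp Require Import all_boot all_order all_algebra.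
From mathcomp Require Import complex spectral.
From mathcomp Require Export reals.
Set Implicit Arguments. Unset Strict Implicit. Unset Printing Implicit Defensive.
Import Order.TTheory GRing.Theory Num.Theory.
Local Open Scope ring_scope.
Local Open Scope complex_scope.
Local Open Scope sesquilinear_scope.

Section Pinching.
Variables (R : realType) (n : nat).
Local Notation C := R[i].

(* The partition of {0,...,n-1} into consecutive intervals with sizes
   d = [:: d(1); ...; d(m)] (listed in increasing order):
   block i (0-based) is J_i = [sumn (take i d), sumn (take i.+1 d)). *)
Definition block (d : seq nat) (i : nat) : pred 'I_n :=
  [pred k : 'I_n | (sumn (take i d) <= k < sumn (take i.+1 d))%N].

Definition blockproj (d : seq nat) (i : nat) : 'M[C]_n :=
  diag_mx (\row_(k < n) ((k \in block d i)%:R : C)).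

Definition pinch (d : seq nat) (X : 'M[C]_n) : 'M[C]_n :=
  \sum_(i < size d) blockproj d i *m X *m blockproj d i.

Definition psd (S : 'M[C]_n) : Prop :=
  S ^t* = S /\ forall v : 'rV[C]_n, 0 <= (v *m S *m v ^t*) 0 0.

Definition pinched_orbit (d : seq nat) (S : 'M[C]_n) (Y : 'M[C]_n) : Prop :=
  exists U : 'M[C]_n, U \is unitarymx /\ Y = pinch d (U ^t* *m S *m U).

Definition convex_mx (A : 'M[C]_n -> Prop) : Prop :=
  forall Y1 Y2, A Y1 -> A Y2 -> forall t : R, 0 <= t <= 1 ->
    A ((t%:C) *: Y1 + ((1 - t)%:C) *: Y2).

End Pinching.

(* Main.v *)
Require Import Defs.
From HB Require Import structures.
From mathcomp Require Import all_boot all_order all_algebra.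
From mathcomp Require Import complex spectral reals.
From mathcomp Require Import perm fingroup ring lra.
Import Order.TTheory GRing.Theory Num.Theory.
Local Open Scope ring_scope.
Local Open Scope complex_scope.
Local Open Scope sesquilinear_scope.
Set Implicit Arguments. Unset Strict Implicit. Unset Printing Implicit Defensive.
From mathcomp Require Import zify.
Section Maj.
Variable R : realType.
Definition pos (y : R) := Num.max y 0.
Definition phi (s : seq R) (t : R) := \sum_(y <- s) pos (y - t).
Definition maj (xs ls : seq R) :=
  \sum_(y <- xs) y = \sum_(y <- ls) y /\ forall t, phi xs t <= phi ls t.

Lemma pos_ge0 y : 0 <= pos y.
Proof. by rewrite /pos le_max lexx orbT. Qed.
Lemma pos_ge y : y <= pos y.
Proof. by rewrite /pos le_max lexx. Qed.
Lemma pos_id y : 0 <= y -> pos y = y.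
Proof. by move=> h; rewrite /pos max_l. Qed.
Lemma pos_0 y : y <= 0 -> pos y = 0.
Proof. by move=> h; rewrite /pos max_r. Qed.
Lemma pos_le y z : y <= z -> 0 <= z -> pos y <= z.
Proof. by move=> h1 h2; rewrite /pos ge_max h1 h2. Qed.

Lemma phi_ge0 s t : 0 <= phi s t.
Proof. by apply: sumr_ge0 => y _; apply: pos_ge0. Qed.

Lemma maj_perm xs xs' ls ls' : perm_eq xs xs' -> perm_eq ls ls' ->
  maj xs ls -> maj xs' ls'.
Proof.
move=> p1 p2 [h1 h2]; split; first by rewrite -(perm_big _ p1) -(perm_big _ p2).
by move=> t; rewrite /phi -(perm_big _ p1) -(perm_big _ p2); apply: h2.
Qed.

Lemma ler_sum_seq (s : seq R) (F G : R -> R) :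
  (forall y, y \in s -> F y <= G y) -> \sum_(y <- s) F y <= \sum_(y <- s) G y.
Proof. by move=> h; rewrite big_seq [X in _ <= X]big_seq; apply: ler_sum. Qed.

Lemma sum_count (P : pred R) s :
  \sum_(y <- s) ((P y)%:R : R) = (count P s)%:R.
Proof.
elim: s => [|y s IH]; first by rewrite big_nil.
by rewrite big_cons IH /= natrD.
Qed.

Lemma maj_step x a b xs' rest :
  b <= x -> x <= a -> (forall y, y \in xs' -> y <= x) ->
  (forall r, r \in rest -> r <= b \/ a <= r) ->
  maj (x :: xs') (a :: b :: rest) -> maj xs' ((a + b - x) :: rest).
Proof.
move=> hbx hxa hy hr [hs hp]; split.
  move: hs; rewrite !big_cons => hs; lra.
move=> t; have H := hp t; have Hb := hp b.
move: H Hb; rewrite /phi !big_cons => H Hb.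
have [htb|hbt] := lerP t b.
  move: H; rewrite (pos_id (y := x - t)) ?subr_ge0 ?(le_trans htb) //.
  rewrite (pos_id (y := a - t)) ?subr_ge0 ?(le_trans htb) ?(le_trans hbx) //.
  rewrite (pos_id (y := b - t)) ?subr_ge0 //.
  rewrite (pos_id (y := a + b - x - t)); first by lra.
  lra.
have [hat|hta] := lerP a t.
  move: H; rewrite (pos_0 (y := x - t)) ?subr_le0 ?(le_trans hxa) //.
  rewrite (pos_0 (y := a - t)) ?subr_le0 //.
  rewrite (pos_0 (y := b - t)) ?subr_le0 ?(le_trans hbx) ?(le_trans hxa) //.
  have := pos_ge0 (a + b - x - t); lra.
have [hxt|htx] := lerP x t.
  have -> : \sum_(y <- xs') pos (y - t) = 0.
    by apply: big1_seq => y /andP[_ /hy yx]; apply: pos_0; lra.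
  by apply: addr_ge0; [apply: pos_ge0 | apply: phi_ge0].
set m := count (fun y => t < y) xs'.
set k := count (fun r => a <= r) rest.
have F1 : \sum_(y <- xs') pos (y - t) <= m%:R * (x - t).
  rewrite /m -sum_count mulr_suml; apply: ler_sum_seq => y /hy yx.
  case: ltrP => ty /=; last by rewrite mul0r pos_0 // subr_le0.
  by rewrite mul1r pos_le; lra.
have F2 : \sum_(y <- xs') pos (y - t) + m%:R * (t - b)
          <= \sum_(y <- xs') pos (y - b).
  rewrite /m -sum_count mulr_suml -big_split /=; apply: ler_sum_seq => y _.
  case: ltrP => ty /=.
    by rewrite mul1r !pos_id; lra.
  by rewrite mul0r addr0 pos_0 ?pos_ge0 //; lra.
have F3 : phi rest t + k%:R * (t - b) = phi rest b.
  rewrite /phi /k -sum_count mulr_suml -big_split /=; apply: eq_big_seq => r /hr [rb|ar].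
    have -> : (a <= r) = false by apply/negbTE; rewrite -ltNge; lra.
    by rewrite mul0r addr0 !pos_0 //; lra.
  by rewrite ar mul1r !pos_id; lra.
have F4 : k%:R * (a - t) <= phi rest t.
  rewrite /phi /k -sum_count mulr_suml; apply: ler_sum_seq => r /hr [rb|ar].
    have -> : (a <= r) = false by apply/negbTE; rewrite -ltNge; lra.
    by rewrite mul0r pos_ge0.
  by rewrite ar mul1r pos_id; lra.
move: F3; rewrite /phi => F3.
have Hp := pos_ge (a + b - x - t).
have [mk|km] := leqP m k.
  have : m%:R * (x - t) <= k%:R * (a - t).
    apply: (@le_trans _ _ (k%:R * (x - t))).
      by apply: ler_wpM2r; [lra | rewrite ler_nat].
    by apply: ler_wpM2l; [apply: ler0n | lra].
  move: F4; rewrite /phi => F4.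
  have := pos_ge0 (a + b - x - t); lra.
have : k%:R * (t - b) + (t - b) <= m%:R * (t - b).
  rewrite -{2}(mul1r (t - b)) -mulrDl; apply: ler_wpM2r; first lra.
  by rewrite natr1 ler_nat.
move: Hb; rewrite (pos_id (y := x - b)) ?subr_ge0 // (pos_id (y := a - b)) ?subr_ge0 ?(le_trans hbx) //.
rewrite subrr (pos_id (y := 0)) //.
lra.
Qed.
End Maj.

Section Pick.
Variable R : realType.

Lemma pick_max (xs : seq R) : xs != [::] ->
  exists x xs', perm_eq xs (x :: xs') /\ forall y, y \in xs' -> y <= x.
Proof.
move=> xs0.
have tr : transitive (fun a b : R => b <= a) by move=> a b c h1 h2; exact: le_trans h2 h1.
have tot : total (fun a b : R => b <= a) by move=> a b; exact: le_total.
have so := sort_sorted tot xs.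
have pe : perm_eq xs (sort (fun a b : R => b <= a) xs) by rewrite perm_sym perm_sort.
move: so pe; case: (sort _ xs) => [|x xs'].
  by move=> _ /perm_nilP h; rewrite h in xs0.
move=> so pe; exists x, xs'; split => //.
by move=> y; have /allP := order_path_min tr so; apply.
Qed.

Lemma split_shape (T D : seq R) b a :
  sorted <=%R (T ++ [:: b, a & D]) ->
  perm_eq (T ++ [:: b, a & D]) (a :: b :: (T ++ D)) /\
  b <= a /\ forall r, r \in T ++ D -> r <= b \/ a <= r.
Proof.
rewrite sorted_pairwise; last exact: le_trans.
rewrite pairwise_cat !pairwise_cons /= => /and3P[/allrelP hTb _ /andP[/andP[ba /allP hbD] /andP[/allP haD _]]].
split.
  rewrite -[_ :: _ :: D]/([:: b; a] ++ D) perm_catCA /=.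
  by rewrite -[b :: a :: _]/([:: b] ++ [:: a] ++ _) perm_catCA.
split=> // r; rewrite mem_cat => /orP[rT|rD].
  by left; apply: hTb => //; rewrite inE eqxx.
by right; apply: haD.
Qed.

Lemma pick_pair (x : R) (ls : seq R) N :
  size ls = N.+2 -> (exists2 r, r \in ls & x <= r) ->
  (exists2 r, r \in ls & r <= x) ->
  exists a b rest, perm_eq ls (a :: b :: rest) /\ b <= x /\ x <= a /\
    forall r, r \in rest -> r <= b \/ a <= r.
Proof.
move=> hsz [r1 r1l xr1] [r2 r2l r2x].
set s := sort <=%R ls.
have so : sorted <=%R s by apply: sort_sorted; exact: le_total.
have pe : perm_eq s ls by rewrite perm_sort.
have ss : size s = N.+2 by rewrite (perm_size pe).
have hasx : has (fun r => x <= r) s.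
  by apply/hasP; exists r1 => //; rewrite (perm_mem pe).
set j := find (fun r => x <= r) s.
have jlt : (j < N.+2)%N by rewrite -ss -has_find.
have hxj := nth_find 0 hasx.
set k := j.-1.
have kN : (k.+1 < size s)%N.
  by rewrite ss /k; case: (j) jlt => [|j'] //=; rewrite ltnS.
have E : s = take k s ++ [:: nth 0 s k, nth 0 s k.+1 & drop k.+2 s].
  by rewrite -{1}(cat_take_drop k s) (drop_nth 0) ?(drop_nth 0 kN) // ltnW.
have so' : sorted <=%R (take k s ++ [:: nth 0 s k, nth 0 s k.+1 & drop k.+2 s]) by rewrite -E.
have [pe2 [hba hr]] := split_shape so'.
exists (nth 0 s k.+1), (nth 0 s k), (take k s ++ drop k.+2 s).
split; first by apply: (@perm_trans _ s); [rewrite perm_sym | rewrite {1}E].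
have mono := sorted_leq_nth le_trans lexx 0 so.
have hxj' : x <= nth 0 s j by [].
have [j0|jpos] := eqVneq j 0%N.
  have k0 : k = 0%N by rewrite /k j0.
  rewrite k0 in hr hba *.
  have r2s : r2 \in s by rewrite (perm_mem pe).
  have s0r2 : nth 0 s 0 <= r2.
    move: r2s => /(nthP 0) [i ilt <-]; apply: mono => //; rewrite inE ss //.
  split; first exact: (le_trans s0r2 r2x).
  split; last exact: hr.
  rewrite j0 in hxj'; exact: (le_trans hxj' hba).
have kj : k.+1 = j by rewrite /k prednK // lt0n.
rewrite kj in hr hba *.
split=> //.
have := @before_find _ 0 (fun r => x <= r) s k; rewrite -/j -kj => /(_ (ltnSn k)) /negbT.
by rewrite -ltNge => /ltW.
Qed.
End Pick.

Section Mx.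
Variable R : realType.
Local Notation C := R[i].

Definition dg N (ls : seq R) : 'M[C]_N := diag_mx (\row_(i < N) (ls`_i)%:C).
Definition Realizes N (xs ls : seq R) := exists U : 'M[C]_N,
  U \is unitarymx /\ forall i : 'I_N, (U^t* *m dg N ls *m U) i i = (xs`_i)%:C.

Lemma conjCr (c : R) : (c%:C)^*%R = c%:C.
Proof. apply: conj_Creal. by rewrite complex_real. Qed.

Lemma conj_diag_entry N (M : 'M[C]_N) (d : 'rV[C]_N) i j :
  (M^t* *m diag_mx d *m M) i j = \sum_k (M k i)^*%R * d 0 k * M k j.
Proof. by rewrite mul_mx_diag !mxE; apply: eq_bigr => k _; rewrite !mxE. Qed.

Lemma perm_conj N (s : 'S_N) (M : 'M[C]_N) i j :
  ((perm_mx s^-1)^t* *m M *m perm_mx s^-1) i j = M (s i) (s j).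
Proof.
by rewrite tr_perm_mx invgK map_perm_mx -row_permE -col_permE !mxE.
Qed.

Lemma perm_unitary N (s : 'S_N) : (perm_mx s : 'M[C]_N) \is unitarymx.
Proof.
by apply/unitarymxP; rewrite tr_perm_mx map_perm_mx -perm_mxM mulgV perm_mx1.
Qed.

Lemma tuple_nth N (xs xs2 : seq R) (h : size xs2 == N) :
  perm_eq xs xs2 -> exists p : 'S_N, forall i : 'I_N, xs`_i = xs2`_(p i).
Proof.
pose t := Tuple h.
move=> pe; have /tuple_permP [p E] : perm_eq xs t by [].
exists p => i.
have -> : xs`_i = nth 0 [tuple tnth t (p i) | i < N] i by rewrite E.
by rewrite -tnth_nth tnth_mktuple (tnth_nth 0).
Qed.

Lemma realize_permx N xs xs2 ls : size xs2 = N -> perm_eq xs xs2 ->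
  Realizes N xs2 ls -> Realizes N xs ls.
Proof.
move=> /eqP hs pe [U [uU hU]].
have [p hp] := tuple_nth hs pe.
exists (U *m perm_mx p^-1); split; first exact: (@mul_unitarymx C N N N U (perm_mx p^-1) uU (perm_unitary _)).
move=> i; rewrite trmx_mul map_mxM.
have -> : (perm_mx p^-1)^t* *m U^t* *m dg N ls *m (U *m perm_mx p^-1) =
  (perm_mx p^-1)^t* *m (U^t* *m dg N ls *m U) *m perm_mx p^-1 by rewrite !mulmxA.
by rewrite perm_conj hU hp.
Qed.

Lemma realize_perml N xs ls ls2 : size ls2 = N -> perm_eq ls ls2 ->
  Realizes N xs ls2 -> Realizes N xs ls.
Proof.
move=> /eqP hs pe [U [uU hU]].
have [p hp] := tuple_nth hs pe.
set P := perm_mx p^-1 : 'M[C]_N.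
have PU : P \is unitarymx by apply: perm_unitary.
have E : dg N ls = P^t* *m dg N ls2 *m P.
  apply/matrixP => i j; rewrite perm_conj !mxE !hp (inj_eq (@perm_inj _ p)).
  by case: eqP => // ->.
have PtU : P^t* \is unitarymx by rewrite trmxC_unitary.
exists (P^t* *m U); split; first exact: (@mul_unitarymx C N N N _ U PtU uU).
move=> i; rewrite E trmx_mul map_mxM trmxCK -!mulmxA.
rewrite [P *m (P^t* *m _)]mulmxA (unitarymxP PU) mul1mx.
rewrite [P *m (P^t* *m _)]mulmxA (unitarymxP PU) mul1mx.
by rewrite !mulmxA hU.
Qed.
End Mx.

From mathcomp Require Import zify.
Section Rot.
Variable R : realType.
Local Notation C := R[i].

Lemma theta_ex (x a b : R) : b <= x -> x <= a ->
  exists th, 0 <= th /\ th <= 1 /\ th * a + (1 - th) * b = x.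
Proof.
move=> hbx hxa; have [ab|ab] := eqVneq a b.
  by exists 1; rewrite subrr mul1r mul0r addr0; split; [|split] => //; lra.
have dpos : 0 < a - b.
  have := le_trans hbx hxa; rewrite le_eqVlt => /orP [/eqP e|]; last by rewrite subr_gt0.
  by rewrite e eqxx in ab.
exists ((x - b) / (a - b)); split; first by apply: divr_ge0; lra.
split; first by rewrite ler_pdivrMr // mul1r; lra.
have h := divfK (lt0r_neq0 dpos) (x - b).
set th := (x - b) / (a - b) in h *; lra.
Qed.

Definition Qm (c s : R) : 'M[C]_2 := \matrix_(i, j)
  (if (j : nat) == 0%N then (if (i : nat) == 0%N then c%:C else s%:C)
   else (if (i : nat) == 0%N then (- s)%:C else c%:C)).

Lemma toC (u v : R) : u = v -> u%:C = v%:C :> C. Proof. by move=> ->. Qed.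
Lemma toC1 (u : R) : u = 1 -> u%:C = 1 :> C. Proof. by move=> ->; rewrite rmorph1. Qed.
Lemma toC0 (u : R) : u = 0 -> u%:C = 0 :> C. Proof. by move=> ->; rewrite rmorph0. Qed.

Lemma Qm_unitary (c s : R) : c * c + s * s = 1 -> Qm c s \is unitarymx.
Proof.
move=> h; apply/unitarymxP/matrixP => i j.
rewrite !mxE !big_ord_recl big_ord0 !mxE /=.
case: i => [[|[|i]] hi] //; case: j => [[|[|j]] hj] //=; rewrite !conjCr addr0 -!rmorphM -rmorphD.
- by apply: toC1; rewrite -h; ring.
- by apply: toC0; ring.
- by apply: toC0; ring.
- by apply: toC1; rewrite -h; ring.
Qed.

Lemma dg_split N (a b : R) rest :
  dg (2 + N) (a :: b :: rest) =
  block_mx (diag_mx (\row_(i < 2) ((a :: b :: rest)`_i)%:C)) 0 0 (dg N rest).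
Proof.
rewrite /dg -diag_mx_row; congr diag_mx; apply/matrixP => i j.
case: (split_ordP j) => k ->; rewrite ?row_mxEl ?row_mxEr !mxE //=.
Qed.

Lemma rot_step N (x a b : R) (xs' rest : seq R) : b <= x -> x <= a ->
  Realizes N.+1 xs' ((a + b - x) :: rest) -> Realizes N.+2 (x :: xs') (a :: b :: rest).
Proof.
move=> hbx hxa [V [uV hV]].
have [th [th0 [th1 hx]]] := theta_ex hbx hxa.
pose c := Num.sqrt th; pose s := Num.sqrt (1 - th).
have hc : c * c = th by rewrite -expr2 sqr_sqrtr.
have hs : s * s = 1 - th by rewrite -expr2 sqr_sqrtr // subr_ge0.
have Qu : Qm c s \is unitarymx by apply: Qm_unitary; rewrite hc hs; ring.
pose Rm : 'M[C]_(2 + N) := block_mx (Qm c s) 0 0 1%:M.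
have Ru : Rm \is unitarymx.
  apply/unitarymxP; rewrite /Rm tr_block_mx map_block_mx !trmx0 trmx1 !map_mx0 map_mx1.
  rewrite mulmx_block !mulmx0 !mul0mx !addr0 !add0r mul1mx (unitarymxP Qu).
  by rewrite -scalar_mx_block.
pose A : 'M[C]_(2 + N) := Rm^t* *m dg (2 + N) (a :: b :: rest) *m Rm.
have AE : A = block_mx ((Qm c s)^t* *m diag_mx (\row_(i < 2) ((a :: b :: rest)`_i)%:C) *m Qm c s) 0 0 (dg N rest).
  rewrite /A /Rm dg_split tr_block_mx map_block_mx !trmx0 trmx1 !map_mx0 map_mx1.
  rewrite !mulmx_block !mulmx0 !mul0mx !addr0 !add0r mul1mx mulmx1.
  by rewrite mul0mx mulmx1.
pose B : 'M[C]_(1 + N.+1) := block_mx 1%:M 0 0 V.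
have Bu : B \is unitarymx.
  apply/unitarymxP; rewrite /B tr_block_mx map_block_mx !trmx0 trmx1 !map_mx0 map_mx1.
  rewrite mulmx_block !mulmx0 !mul0mx !addr0 !add0r mul1mx (unitarymxP uV).
  by rewrite -scalar_mx_block.
have Dr : drsubmx (A : 'M_(1 + N.+1, 1 + N.+1)) = dg N.+1 ((a + b - x) :: rest).
  apply/matrixP => i j; rewrite 2!mxE.
  change (@fun_of_matrix _ (2 + N) (2 + N) A (rshift 1 i) (rshift 1 j) = dg N.+1 ((a + b - x) :: rest) i j).
  rewrite AE.
  case: (split_ordP (rshift 1 i : 'I_(2 + N))) => i2 ei;
  case: (split_ordP (rshift 1 j : 'I_(2 + N))) => j2 ej;
  rewrite ei ej ?block_mxEul ?block_mxEur ?block_mxEdl ?block_mxEdr;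
  move/(congr1 val): ei; move/(congr1 val): ej => /= ej ei.
  - have i0 : i = ord0 by apply: val_inj => /=; move: ei (ltn_ord i2); lia.
    have j0 : j = ord0 by apply: val_inj => /=; move: ej (ltn_ord j2); lia.
    have i21 : i2 = 1 :> 'I_2 by apply: val_inj => /=; rewrite -ei i0.
    have j21 : j2 = 1 :> 'I_2 by apply: val_inj => /=; rewrite -ej j0.
    rewrite i0 j0 i21 j21 conj_diag_entry !big_ord_recl big_ord0 !mxE /= !conjCr.
    rewrite !mulr1n addr0 -!rmorphM -rmorphD; apply: toC.
    rewrite -[(-s) * a * (-s)]/((-s) * a * (-s)) (_ : (-s) * a * (-s) = (s * s) * a); last by ring.
    rewrite (_ : c * b * c = (c * c) * b); last by ring.
    rewrite hc hs; lra.
  - have i0 : (i : nat) = 0%N by move: ei (ltn_ord i2); lia.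
    rewrite !mxE (_ : (i == j) = false) ?mulr0n //.
    by apply/negbTE; rewrite -val_eqE /= i0; move: ej; lia.
  - have j0 : (j : nat) = 0%N by move: ej (ltn_ord j2); lia.
    rewrite !mxE (_ : (i == j) = false) ?mulr0n //.
    by apply/negbTE; rewrite -val_eqE /= j0; move: ei; lia.
  - rewrite !mxE (_ : (i == j) = (i2 == j2)); last first.
      by rewrite -!val_eqE /=; apply/eqP/eqP; lia.
    by rewrite (_ : (i : nat) = i2.+1) //; lia.
exists ((Rm : 'M_(N.+2)) *m (B : 'M_(N.+2))); split.
  exact: (@mul_unitarymx _ N.+2 N.+2 N.+2 Rm B Ru Bu).
have E2 : ((Rm : 'M_(N.+2)) *m (B : 'M_(N.+2)))^t* *m dg N.+2 (a :: b :: rest) *m ((Rm : 'M_(N.+2)) *m (B : 'M_(N.+2)))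
   = B^t* *m (A : 'M_(1 + N.+1)) *m B by rewrite /A trmx_mul map_mxM !mulmxA.
suff H : forall k : 'I_(1 + N.+1), (B^t* *m (A : 'M_(1 + N.+1)) *m B) k k = ((x :: xs')`_k)%:C.
  by move=> i; rewrite E2; exact: (H i).
move=> i; rewrite -[A : 'M_(1 + N.+1)](@submxK _ 1 N.+1 1 N.+1) Dr.
rewrite /B tr_block_mx map_block_mx !trmx0 trmx1 !map_mx0 map_mx1.
rewrite !mulmx_block !mulmx0 !mul0mx !addr0 !add0r !mul1mx !mulmx1.
case: (split_ordP i) => k ->.
  rewrite block_mxEul ord1 2!mxE /=.
  change (@fun_of_matrix _ (2 + N) (2 + N) A (lshift N.+1 (ord0 : 'I_1)) (lshift N.+1 (ord0 : 'I_1)) = x%:C).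
  rewrite (_ : (lshift N.+1 (ord0 : 'I_1) : 'I_(2 + N)) = lshift N (ord0 : 'I_2)); last exact: val_inj.
  rewrite AE block_mxEul conj_diag_entry !big_ord_recl big_ord0 !mxE /= !conjCr.
  rewrite addr0 -!rmorphM -rmorphD; apply: toC.
  rewrite (_ : c * a * c = (c * c) * a); last by ring.
  rewrite (_ : s * b * s = (s * s) * b); last by ring.
  rewrite hc hs; lra.
by rewrite block_mxEdr hV.
Qed.
End Rot.
Section Horn.
Variable R : realType.
Local Notation C := R[i].

Lemma sum_const (c : R) (s : seq R) : \sum_(y <- s) c = c *+ size s.
Proof. by elim: s => [|y s IH]; rewrite ?big_nil ?big_cons ?IH ?mulrS. Qed.

Lemma exists_ge (x : R) xs' ls : maj (x :: xs') ls -> exists2 r, r \in ls & x <= r.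
Proof.
move=> [_ hp]; case: (boolP (has (fun r => x <= r) ls)) => [/hasP [r rl xr]|hn].
  by exists r.
exfalso.
have hlt : forall r, r \in ls -> r < x.
  by move=> r rl; rewrite ltNge; apply: contra hn => xr; apply/hasP; exists r.
have [ls0|lsn] := eqVneq ls [::].
  have := hp (x - 1); rewrite /phi ls0 big_nil big_cons.
  have := pos_ge (x - (x - 1)); have := phi_ge0 xs' (x - 1); rewrite /phi; lra.
have [m [ls' [pm hm]]] := pick_max lsn.
have mls : m \in ls by rewrite (perm_mem pm) mem_head.
have := hp m; rewrite /phi (perm_big _ pm) big_cons big_cons.
have z : \sum_(r <- ls') pos (r - m) = 0.
  by apply: big1_seq => r /andP[_ /hm rm]; apply: pos_0; rewrite subr_le0.
rewrite z (pos_0 (y := m - m)) ?subrr //.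
have := hlt m mls; have := pos_ge (x - m); have := phi_ge0 xs' m; rewrite /phi /= addr0; lra.
Qed.

Lemma exists_le (x : R) xs' ls : (forall y, y \in xs' -> y <= x) ->
  size ls = (size xs').+1 -> maj (x :: xs') ls -> exists2 r, r \in ls & r <= x.
Proof.
move=> hy hs [hsum _]; case: (boolP (has (fun r => r <= x) ls)) => [/hasP [r rl xr]|hn].
  by exists r.
exfalso.
have hlt : forall r, r \in ls -> x < r.
  by move=> r rl; rewrite ltNge; apply: contra hn => xr; apply/hasP; exists r.
clear hn; case: ls hs hsum hlt => [//|l0 ls'] [hs] hsum hlt.
have h1 : \sum_(y <- xs') y <= \sum_(y <- xs') x by apply: ler_sum_seq.
have h2 : \sum_(y <- ls') x <= \sum_(y <- ls') y.
  by apply: ler_sum_seq => y yl; apply/ltW/hlt; rewrite inE yl orbT.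
have h3 := hlt l0 (mem_head _ _).
move: hsum h1 h2; rewrite !big_cons !sum_const hs; lra.
Qed.

Lemma horn N : forall xs ls : seq R, size xs = N -> size ls = N -> maj xs ls ->
  Realizes N xs ls.
Proof.
elim: N => [|N IH] xs ls hx hl hm.
  exists 1%:M; split; last by case.
  by apply/unitarymxP; rewrite trmx1 map_mx1 mulmx1.
case: N IH hx hl => [|N] IH hx hl.
  case: xs hx hm => [|x [|//]] // _; case: ls hl => [|l [|//]] // _ [hs _].
  move: hs; rewrite !big_cons !big_nil !addr0 => hs.
  exists 1%:M; split; first by apply/unitarymxP; rewrite trmx1 map_mx1 mulmx1.
  by move=> i; rewrite ord1 trmx1 map_mx1 mul1mx mulmx1 !mxE /= hs.
have xs0 : xs != [::] by move: hx; case: (xs).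
have [x [xs' [pxs hy]]] := pick_max xs0.
have hm1 : maj (x :: xs') ls by apply: maj_perm hm.
have sxs' : size xs' = N.+1 by move: (perm_size pxs); rewrite hx => -[].
have hge := exists_ge hm1.
have hle := exists_le hy (etrans hl (congr1 S (esym sxs'))) hm1.
have [a [b [rest [pls [hbx [hxa hr]]]]]] := pick_pair hl hge hle.
have hm2 : maj (x :: xs') (a :: b :: rest) by apply: maj_perm hm1.
have hm3 := maj_step hbx hxa hy hr hm2.
have srest : size rest = N by move: (perm_size pls); rewrite hl => -[].
have hV := IH xs' ((a + b - x) :: rest) sxs' (congr1 S srest) hm3.
have hU := rot_step hbx hxa hV.
have hsz : size (x :: xs') = N.+2 by rewrite /= sxs'.
have hU2 := realize_permx hsz pxs hU.
by apply: realize_perml hU2; rewrite //= srest.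
Qed.
End Horn.

Section Nec.
Variable R : realType.
Local Notation C := R[i].

Lemma conj_mul_norm (z : C) : (z^*%R * z) = ((complex.Re z)^+2 + (complex.Im z)^+2)%:C.
Proof. by rewrite add_Re2_Im2 normCK mulrC. Qed.

Lemma pos_jensen I (r : seq I) (w a : I -> R) : (forall i, 0 <= w i) ->
  pos (\sum_(i <- r) w i * a i) <= \sum_(i <- r) w i * pos (a i).
Proof.
move=> hw; apply: pos_le.
  by apply: ler_sum => i _; apply: ler_wpM2l => //; apply: pos_ge.
by apply: sumr_ge0 => i _; apply: mulr_ge0 => //; apply: pos_ge0.
Qed.

Lemma sum_seq_ord (ls : seq R) N (F : R -> R) : size ls = N ->
  \sum_(y <- ls) F y = \sum_(k < N) F ls`_k.
Proof. by move=> hs; rewrite (big_nth 0) hs big_mkord. Qed.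

Lemma sum_map_enum N (f : 'I_N -> R) (F : R -> R) :
  \sum_(y <- map f (enum 'I_N)) F y = \sum_(i < N) F (f i).
Proof. by rewrite big_map big_enum. Qed.

Lemma necessity N (U : 'M[C]_N) (ls : seq R) : size ls = N -> U \is unitarymx ->
  exists f : 'I_N -> R, (forall i, (U^t* *m dg N ls *m U) i i = (f i)%:C) /\
    maj (map f (enum 'I_N)) ls.
Proof.
move=> hs hU.
pose w (k i : 'I_N) := (complex.Re (U k i))^+2 + (complex.Im (U k i))^+2.
have w0 : forall k i, 0 <= w k i by move=> k i; apply: addr_ge0; apply: sqr_ge0.
have wrow : forall k, \sum_i w k i = 1.
  move=> k; apply: complexI; rewrite rmorph_sum rmorph1.
  have := congr1 (fun M : 'M[C]_N => M k k) (unitarymxP hU); rewrite !mxE eqxx mulr1n => <-.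
  by apply: eq_bigr => i _; rewrite !mxE mulrC conj_mul_norm.
have wcol : forall i, \sum_k w k i = 1.
  move=> i; apply: complexI; rewrite rmorph_sum rmorph1.
  have := congr1 (fun M : 'M[C]_N => M i i) (mulmx1C (unitarymxP hU)); rewrite !mxE eqxx mulr1n => <-.
  by apply: eq_bigr => k _; rewrite !mxE conj_mul_norm.
pose f i := \sum_k w k i * ls`_k.
exists f; split.
  move=> i; rewrite conj_diag_entry rmorph_sum; apply: eq_bigr => k _.
  by rewrite mxE mulrAC conj_mul_norm -rmorphM mulrC.
split.
  rewrite sum_map_enum (sum_seq_ord _ hs) /f exchange_big /=.
  by apply: eq_bigr => k _; rewrite -mulr_suml wrow mul1r.
move=> t; rewrite /phi sum_map_enum (sum_seq_ord _ hs).
apply: (@le_trans _ _ (\sum_i \sum_k w k i * pos (ls`_k - t))).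
  apply: ler_sum => i _.
  have -> : f i - t = \sum_k w k i * (ls`_k - t).
    rewrite /f [RHS](eq_bigr _ (fun k _ => mulrBr _ _ _)) sumrB -mulr_suml wcol mul1r.
    by [].
  exact: pos_jensen.
rewrite exchange_big /=; apply: ler_sum => k _.
by rewrite -mulr_suml wrow mul1r.
Qed.

Lemma maj_convex I (e : seq I) (f g : I -> R) ls (t : R) : 0 <= t <= 1 ->
  maj (map f e) ls -> maj (map g e) ls ->
  maj (map (fun i => t * f i + (1 - t) * g i) e) ls.
Proof.
move=> /andP[t0 t1] [hf1 hf2] [hg1 hg2]; split.
  move: hf1 hg1; rewrite !big_map big_split /= -!mulr_sumr => -> ->; ring.
move=> s; have := hf2 s; have := hg2 s; rewrite /phi !big_map => h2 h1.
apply: (@le_trans _ _ (t * \sum_(i <- e) pos (f i - s) + (1 - t) * \sum_(i <- e) pos (g i - s))).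
  rewrite !mulr_sumr -big_split /=; apply: ler_sum => i _; apply: pos_le.
    have := pos_ge (f i - s); have := pos_ge (g i - s) => hg hf.
    have := ler_wpM2l t0 hf; have : 0 <= 1 - t by lra.
    move=> t1' h3; have := ler_wpM2l t1' hg; lra.
  apply: addr_ge0; apply: mulr_ge0; rewrite ?pos_ge0 //; lra.
have := ler_wpM2l t0 h1; have : 0 <= 1 - t by lra.
move=> t1' h3; have := ler_wpM2l t1' h2; lra.
Qed.
End Nec.
Section Pinch.
Variables (R : realType) (n : nat).
Local Notation C := R[i].

Lemma pinch_entry (d : seq nat) (X : 'M[C]_n) p q :
  pinch d X p q = \sum_(i < size d) (((p \in block d i) && (q \in block d i))%:R * X p q).
Proof.
rewrite /pinch summxE; apply: eq_bigr => i _.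
rewrite /blockproj mul_diag_mx mul_mx_diag !mxE.
by case: (p \in _); case: (q \in _); rewrite /= ?mul1r ?mulr1 ?mul0r ?mulr0.
Qed.

Lemma sumn_take_mono (d : seq nat) i j : (i <= j)%N -> (sumn (take i d) <= sumn (take j d))%N.
Proof. by move=> ij; rewrite -(subnKC ij) takeD sumn_cat leq_addr. Qed.

Lemma block_uniq (d : seq nat) (k : 'I_n) i j :
  k \in block d i -> k \in block d j -> i = j.
Proof.
rewrite !inE => /andP[h1 h2] /andP[h3 h4].
have [ij|ji|//] := ltngtP i j.
  have := sumn_take_mono d ij; lia.
have := sumn_take_mono d ji; lia.
Qed.

Lemma pinch_inblock (d : seq nat) (X : 'M[C]_n) (p q : 'I_n) i0 (hi : (i0 < size d)%N) :
  p \in block d i0 -> q \in block d i0 -> pinch d X p q = X p q.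
Proof.
move=> hp hq; rewrite pinch_entry (bigD1 (Ordinal hi)) //= hp hq mul1r big1 ?addr0 //.
move=> i /negP ne; case: (boolP (p \in block d i)) => [pi|]; last by rewrite mul0r.
by exfalso; apply: ne; apply/eqP/val_inj => /=; apply: block_uniq pi hp.
Qed.

Lemma pinch_ones (X : 'M[C]_n) : pinch (nseq n 1%N) X = diag_mx (\row_k X k k).
Proof.
apply/matrixP => p q; rewrite pinch_entry size_nseq.
have hb : forall i k : 'I_n, (k \in block (nseq n 1%N) i) = (k == i).
  move=> i k; rewrite inE /= !take_nseq ?sumn_nseq ?mul1n //; last exact: ltnW.
  by rewrite -val_eqE /=; apply/idP/eqP; lia.
rewrite (bigD1 p) //= !hb eqxx /= big1 ?addr0; last first.
  by move=> i /negbTE ne; rewrite !hb eq_sym ne mul0r.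
rewrite !mxE eq_sym; case: eqP => [->|]; by rewrite ?mul1r ?mul0r.
Qed.
End Pinch.
Section Main.
Variable R : realType.
Local Notation C := R[i].

Lemma delta_conj n m (W : 'M[C]_(n, m)) a i j :
  (W^t* *m delta_mx a a *m W) i j = (W a i)^*%R * W a j.
Proof.
rewrite mxE (bigD1 a) //= big1 ?addr0; last first.
  move=> k /negbTE ka; rewrite mxE big1 ?mul0r // => l _.
  by rewrite !mxE ka andbF mulr0.
rewrite mxE (bigD1 a) //= big1 ?addr0; last first.
  by move=> l /negbTE la; rewrite !mxE la mulr0.
by rewrite !mxE !eqxx mulr1.
Qed.

Lemma psd_delta n (a : 'I_n) : psd (delta_mx a a : 'M[C]_n).
Proof.
split.
  by apply/matrixP => i j; rewrite !mxE rmorph_nat andbC.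
move=> v; rewrite {1}(_ : v = (v^t*)^t*); last by rewrite trmxCK.
rewrite delta_conj mulrC.
exact: mul_conjC_ge0.
Qed.

Lemma unitary1 n : (1%:M : 'M[C]_n) \is unitarymx.
Proof. by apply/unitarymxP; rewrite trmx1 map_mx1 mulmx1. Qed.

Lemma half_neq0 : ((1 / 2 : R)%:C : C) != 0.
Proof. by rewrite (fmorph_eq0 (real_complex R)); apply/eqP; lra. Qed.
Lemma entry_comb n (a b : C) (Y1 Y2 : 'M[C]_n) i j :
  (a *: Y1 + b *: Y2) i j = a * Y1 i j + b * Y2 i j.
Proof. by rewrite !mxE. Qed.
Lemma diag_row_entry n (F : 'I_n -> C) i j :
  diag_mx (\row_k F k) i j = F i *+ (i == j).
Proof. by rewrite !mxE. Qed.
End Main.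
Unset Implicit Arguments.
Theorem proposition3p4 (R : realType) (n : nat) (d : seq nat) :
  all (fun k => (0 < k)%N) d -> sumn d = n ->
  ((forall S : 'M[R[i]]_n, psd S -> convex_mx (pinched_orbit d S)) <->
   all (fun k => k == 1%N) d).
Proof.
move=> hpos hsum; split.
  move=> hconv; apply/allP => k kd; apply/negPn/negP => k1.
  have [i0 i0lt ei0] := nthP 0 kd.
  have k0 : (0 < k)%N by move/allP: hpos; apply.
  set a := sumn (take i0 d).
  have hta : sumn (take i0.+1 d) = (a + k)%N by rewrite (take_nth 0 i0lt) sumn_rcons ei0.
  have hn : (sumn (take i0.+1 d) <= n)%N.
    by rewrite -hsum -{2}(take_size d); apply: sumn_take_mono.
  have an : (a < n)%N by move/eqP: k1; lia.
  have bn : (a.+1 < n)%N by move/eqP: k1; lia.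
  pose ia := Ordinal an; pose ib := Ordinal bn.
  have hia : ia \in block d i0 by rewrite inE /= -/a hta; move/eqP: k1; lia.
  have hib : ib \in block d i0 by rewrite inE /= -/a hta; move/eqP: k1; lia.
  have iab : ia != ib by rewrite -val_eqE /=; lia.
  pose S : 'M[R[i]]_n := delta_mx ia ia.
  have hS : psd S := @psd_delta R n ia.
  pose s := tperm ia ib.
  pose Q : 'M[R[i]]_n := perm_mx s^-1.
  have h1 : pinched_orbit d S (pinch d (1%:M^t* *m S *m 1%:M)).
    by exists 1%:M; split => //; apply: unitary1.
  have h2 : pinched_orbit d S (pinch d (Q^t* *m S *m Q)).
    by exists Q; split => //; apply: (@perm_unitary R n).
  have h12 : (0 : R) <= (1 / 2 : R) <= 1.
    by apply/andP; split; [apply: divr_ge0 | rewrite ler_pdivrMr // mul1r ler1n].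
  have [U [_ hU]] := hconv S hS _ _ h1 h2 (1 / 2) h12.
  have Y1e : forall p q, p \in block d i0 -> q \in block d i0 ->
      pinch d (1%:M^t* *m S *m 1%:M) p q = S p q.
    move=> p q hp hq; rewrite (pinch_inblock (1%:M^t* *m S *m 1%:M) i0lt hp hq).
    by rewrite trmx1 map_mx1 mul1mx mulmx1.
  have Y2e : forall p q, p \in block d i0 -> q \in block d i0 ->
      pinch d (Q^t* *m S *m Q) p q = S (s p) (s q).
    move=> p q hp hq; rewrite (pinch_inblock (Q^t* *m S *m Q) i0lt hp hq).
    exact: perm_conj.
  have Ye : forall p q, p \in block d i0 -> q \in block d i0 ->
      pinch d (U^t* *m S *m U) p q = (U ia p)^*%R * U ia q.
    move=> p q hp hq; rewrite (pinch_inblock (U^t* *m S *m U) i0lt hp hq).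
    exact: delta_conj.
  have E := fun p q => congr1 (fun M : 'M[R[i]]_n => M p q) hU.
  have eaa : (1 / 2 : R)%:C * S ia ia + (1 - 1 / 2 : R)%:C * S (s ia) (s ia) = (U ia ia)^*%R * U ia ia.
    by rewrite -(Y1e _ _ hia hia) -(Y2e _ _ hia hia) -(Ye _ _ hia hia) -entry_comb; exact: E.
  have ebb : (1 / 2 : R)%:C * S ib ib + (1 - 1 / 2 : R)%:C * S (s ib) (s ib) = (U ia ib)^*%R * U ia ib.
    by rewrite -(Y1e _ _ hib hib) -(Y2e _ _ hib hib) -(Ye _ _ hib hib) -entry_comb; exact: E.
  have eab : (1 / 2 : R)%:C * S ia ib + (1 - 1 / 2 : R)%:C * S (s ia) (s ib) = (U ia ia)^*%R * U ia ib.
    by rewrite -(Y1e _ _ hia hib) -(Y2e _ _ hia hib) -(Ye _ _ hia hib) -entry_comb; exact: E.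
  have iba : ib != ia by rewrite eq_sym.
  move: eaa ebb eab; rewrite /s tpermL tpermR /S !mxE !eqxx ?(negbTE iab) ?(negbTE iba) /=.
  have half2 : (1 - 1 / 2 : R) = 1 / 2 by lra.
  rewrite half2 !mulr1 !mulr0 !addr0 !add0r => eaa ebb eab.
  have hn0 := half_neq0 R.
  move/eqP: eab; rewrite eq_sym mulf_eq0 => /orP [/eqP h|/eqP h].
    by move/eqP: h; rewrite conjC_eq0 => /eqP h; move: eaa; rewrite h mulr0 => h'; rewrite h' eqxx in hn0.
  by move: ebb; rewrite h mulr0 => h'; rewrite h' eqxx in hn0.
move=> hall S [hSh _] Y1 Y2 [U1 [hU1 ->]] [U2 [hU2 ->]] t ht.
have dE : d = nseq n 1%N.
  have /all_pred1P dE : all (pred1 1%N) d by [].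
  by rewrite -hsum {2}dE sumn_nseq mul1n.
rewrite dE !pinch_ones.
pose P := spectralmx S; pose sp := spectral_diag S.
have hn : S \is normalmx by apply/normalmxP; rewrite hSh.
have Pu : P \is unitarymx := spectral_unitarymx S.
have SE : S = P^t* *m diag_mx sp *m P.
  by move/orthomx_spectralP: hn => {1}->; rewrite invmx_unitary.
have hher : S \is hermsymmx by apply/is_hermitianmxP; rewrite expr0 scale1r hSh.
have hreal : sp \is a realmx := hermitian_spectral_diag_real hher.
pose ls := [seq complex.Re (sp 0 k) | k <- enum 'I_n].
have sls : size ls = n by rewrite size_map size_enum_ord.
have Dls : diag_mx sp = dg n ls.
  rewrite /dg; congr diag_mx; apply/matrixP => i k; rewrite ord1 mxE.
  rewrite (nth_map k) ?size_enum_ord // nth_ord_enum RRe_real //.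
  exact: (mxOverP hreal).
have key : forall U : 'M[R[i]]_n, U^t* *m S *m U = (P *m U)^t* *m dg n ls *m (P *m U).
  by move=> U; rewrite SE -Dls trmx_mul map_mxM !mulmxA.
have [f1 [hf1 hm1]] := necessity sls (@mul_unitarymx _ n n n _ _ Pu hU1).
have [f2 [hf2 hm2]] := necessity sls (@mul_unitarymx _ n n n _ _ Pu hU2).
have hm := maj_convex ht hm1 hm2.
set g := fun i => t * f1 i + (1 - t) * f2 i.
have sg : size (map g (enum 'I_n)) = n by rewrite size_map size_enum_ord.
have [W [hW hWe]] := horn sg sls hm.
have PtW : P^t* *m W \is unitarymx.
  by apply: (@mul_unitarymx _ n n n); rewrite ?trmxC_unitary.
exists (P^t* *m W); split => //.
rewrite pinch_ones (key (P^t* *m W)) [P *m (P^t* *m W)]mulmxA (unitarymxP Pu) mul1mx.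
apply/matrixP => p q; rewrite entry_comb !diag_row_entry (key U1) (key U2) hWe hf1 hf2.
rewrite (nth_map p) ?size_enum_ord // nth_ord_enum.
rewrite !mulrnAr -mulrnDl; congr (_ *+ _).
by rewrite -!rmorphM -rmorphD.
Qed.
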